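(* Let $n\ge1$. The coefficient of $x^{n-1}$ in the expansion of \[\frac{G(x)-H(x)}{x^2}\,(1+a(x)x^2)\] has the form $u\big(a_{n-1}+S_0(n)+S_1(n)v+S_2(n)v^2+\cdots+S_n(n)v^n\big)$, where $u=2j-1$, $v=j(j-1)$, and each $S_i(n)$ is a polynomial in $a_0,a_1,\dots,a_{n-2}$ with rational coefficients which is independent of $j$. In particular, $S_0(1)=0$ and $S_1(1)=\tfrac16$.
   Context: $j$ is a positive integer; $a_0,a_1,\dots$ are indeterminates and $a(x)=\sum_{i\ge0}a_ix^i$ (formal power series in $x$). Set $G(x)=\prod_{i=0}^{j-1}\frac{1+a(x)x^2}{1+ix}$ and $H(x)=\prod_{i=1-j}^{-1}\frac{1+ix}{1+a(x)x^2}$ (so $G(x)=1+a(x)x^2$ and $H(x)=1$ when $j=1$), viewed as formal power series in $x$. *)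

(* Defs.v *)
From HB Require Import structures.
From mathcomp Require Import all_boot all_algebra.
From mathcomp Require Import mpoly.
Set Implicit Arguments. Unset Strict Implicit. Unset Printing Implicit Defensive.
Import GRing.Theory.
Local Open Scope ring_scope.

(* Formal power series in x over a commutative ring with units R,
   represented by their coefficient sequence: f n = coefficient of x^n. *)
Section FPS.
Variable R : comUnitRingType.

Definition fps := nat -> R.

Definition fps_const (c : R) : fps := fun n => if n == 0%N then c else 0.
Definition fps_X : fps := fun n => (n == 1%N)%:R.
Definition fps_add (f g : fps) : fps := fun n => f n + g n.
Definition fps_sub (f g : fps) : fps := fun n => f n - g n.
Definition fps_mul (f g : fps) : fps :=
  fun n => \sum_(i < n.+1) f i * g (n - i)%N.
(* f / x^k (exact when the first k coefficients of f vanish) *)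
Definition fps_divX (k : nat) (f : fps) : fps := fun n => f (n + k)%N.

(* Multiplicative inverse of a power series with invertible constant term,
   by the standard recursion b_0 = f_0^-1,
   b_n = - f_0^-1 * sum_{i=1}^n f_i b_{n-i}.
   fps_inv_seq f n = [:: b_0; ...; b_n]. *)
Fixpoint fps_inv_seq (f : fps) (n : nat) : seq R :=
  match n with
  | 0%N => [:: (f 0%N)^-1]
  | m.+1 => let s := fps_inv_seq f m in
            rcons s (- (f 0%N)^-1 * \sum_(k < m.+1) f k.+1 * nth 0 s (m - k)%N)
  end.
Definition fps_inv (f : fps) : fps := fun n => nth 0 (fps_inv_seq f n) n.

Definition one_ax2 (a : fps) : fps :=
  fps_add (fps_const 1) (fps_mul a (fps_mul fps_X fps_X)).
Definition one_cx (c : R) : fps := fps_add (fps_const 1) (fps_mul (fps_const c) fps_X).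

Definition Gser (a : fps) (j : nat) : fps :=
  \big[fps_mul/fps_const 1]_(0 <= i < j) fps_mul (one_ax2 a) (fps_inv (one_cx i%:R)).
(* H(x) = prod_{i=1-j}^{-1} (1 + i x) / (1 + a(x) x^2)
        = prod_{k=1}^{j-1} (1 - k x) / (1 + a(x) x^2)   (i = -k) *)
Definition Hser (a : fps) (j : nat) : fps :=
  \big[fps_mul/fps_const 1]_(1 <= k < j) fps_mul (one_cx (- k%:R)) (fps_inv (one_ax2 a)).

Definition lemma_series (a : fps) (j : nat) : fps :=
  fps_mul (fps_divX 2 (fps_sub (Gser a j) (Hser a j))) (one_ax2 a).

End FPS.

(* Main.v *)
Require Import Defs.
From HB Require Import structures.
From mathcomp Require Import all_boot all_algebra.
From mathcomp Require Import mpoly.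
Import GRing.Theory.
Local Open Scope ring_scope.

From mathcomp Require Import ring zify.
From Stdlib Require Import FunctionalExtensionality.
Import Num.Theory.
Set Implicit Arguments. Unset Strict Implicit. Unset Printing Implicit Defensive.


Section FpsAlg.
Variable T : comUnitRingType.
Implicit Types f g h : fps T.

Definition toP (N : nat) f : {poly T} := \poly_(i < N.+1) f i.

Lemma fps_mulE N f g n : (n <= N)%N ->
  fps_mul f g n = (toP N f * toP N g)`_n.
Proof.
move=> le; rewrite coefM /fps_mul; apply: eq_bigr => i _.
rewrite /toP !coef_poly.
have h1 : (i < N.+1)%N by apply: (leq_ltn_trans (leq_ord i)); rewrite ltnS.
have h2 : (n - i < N.+1)%N by rewrite ltnS (leq_trans (leq_subr _ _)).
by rewrite h1 h2.
Qed.

Lemma coefM_ext (p q p' q' : {poly T}) n :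
  (forall i, (i <= n)%N -> p`_i = p'`_i) ->
  (forall i, (i <= n)%N -> q`_i = q'`_i) -> (p * q)`_n = (p' * q')`_n.
Proof.
move=> hp hq; rewrite !coefM; apply: eq_bigr => i _.
by rewrite hp ?hq // ?leq_subr // -ltnS.
Qed.

Lemma fps_mulC f g : fps_mul f g = fps_mul g f.
Proof. by apply: functional_extensionality => n; rewrite !(fps_mulE _ _ (leqnn n)) mulrC. Qed.

Lemma fps_mulA f g h : fps_mul f (fps_mul g h) = fps_mul (fps_mul f g) h.
Proof.
apply: functional_extensionality => n.
rewrite !(fps_mulE _ _ (leqnn n)).
transitivity ((toP n f * (toP n g * toP n h))`_n).
  apply: coefM_ext => // i le; rewrite /toP coef_poly ltnS le.
  by rewrite (fps_mulE _ _ le).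
rewrite mulrA; apply: coefM_ext => // i le; rewrite /toP coef_poly ltnS le.
by rewrite (fps_mulE _ _ le).
Qed.

Lemma fps_mul1f f : fps_mul (fps_const 1) f = f.
Proof.
apply: functional_extensionality => n.
rewrite /fps_mul big_ord_recl /= /fps_const eqxx mul1r subn0 big1 ?addr0 //.
by move=> i _; rewrite mul0r.
Qed.

HB.instance Definition _ := Monoid.isComLaw.Build (fps T) (fps_const 1) (@fps_mul T)
  fps_mulA fps_mulC fps_mul1f.

Lemma fps_mulDl f g h : fps_mul (fps_add f g) h = fps_add (fps_mul f h) (fps_mul g h).
Proof.
apply: functional_extensionality => n.
by rewrite /fps_mul /fps_add -big_split; apply: eq_bigr => i _; rewrite mulrDl.
Qed.

Lemma fps_mulBl f g h : fps_mul (fps_sub f g) h = fps_sub (fps_mul f h) (fps_mul g h).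
Proof.
apply: functional_extensionality => n.
by rewrite /fps_mul /fps_sub -sumrB; apply: eq_bigr => i _; rewrite mulrBl.
Qed.

Lemma fps_mulCf c f n : fps_mul (fps_const c) f n = c * f n.
Proof.
rewrite /fps_mul big_ord_recl /= /fps_const eqxx subn0 big1 ?addr0 //.
by move=> i _; rewrite mul0r.
Qed.

Lemma fps_mulXf f n : fps_mul (fps_X T) f n = if n is n'.+1 then f n' else 0.
Proof.
rewrite /fps_mul big_ord_recl /= {1}/fps_X /= mul0r add0r.
case: n => [|n]; first by rewrite big_ord0.
rewrite big_ord_recl /= /fps_X /= mul1r subSS subn0 big1 ?addr0 //.
by move=> i _; rewrite /= mul0r.
Qed.

Lemma fps_inv_seq_size f n : size (fps_inv_seq f n) = n.+1.
Proof. by elim: n => [|n IH] //=; rewrite size_rcons IH. Qed.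

Lemma fps_inv_seq_nth f n k : (k <= n)%N -> nth 0 (fps_inv_seq f n) k = fps_inv f k.
Proof.
elim: n => [|n IH] le.
  by rewrite leqn0 in le; rewrite (eqP le).
rewrite leq_eqVlt in le; case/orP: le => [/eqP->|lt]; first by [].
by rewrite /= nth_rcons fps_inv_seq_size lt IH.
Qed.

Lemma fps_invS f n : fps_inv f n.+1 =
  - (f 0%N)^-1 * \sum_(k < n.+1) f k.+1 * fps_inv f (n - k)%N.
Proof.
rewrite /fps_inv /= nth_rcons fps_inv_seq_size ltnn eqxx.
congr (_ * _); apply: eq_bigr => k _; rewrite fps_inv_seq_nth //.
exact: leq_subr.
Qed.

Lemma fps_mulV f : f 0%N \is a GRing.unit -> fps_mul f (fps_inv f) = fps_const 1.
Proof.
move=> u; apply: functional_extensionality => n.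
case: n => [|n].
  by rewrite /fps_mul big_ord1 /fps_inv /= mulrV.
rewrite /fps_mul big_ord_recl /= subn0 fps_invS mulrA mulrN mulrV // mulN1r.
rewrite /fps_const /=; rewrite addrC; apply/eqP; rewrite subr_eq0; apply/eqP.
by apply: eq_bigr => i _; rewrite /bump /= add1n subSS.
Qed.

Lemma one_cxE (c : T) n : one_cx c n = (n == 0%N)%:R + c * (n == 1%N)%:R.
Proof. by rewrite /one_cx /fps_add fps_mulCf /fps_const /fps_X; case: n. Qed.

Lemma one_cx_mul (c : T) g n : fps_mul (one_cx c) g n =
  g n + c * (if n is n'.+1 then g n' else 0).
Proof.
rewrite /one_cx fps_mulDl /fps_add fps_mul1f -fps_mulA fps_mulCf fps_mulXf.
by [].
Qed.

Lemma one_ax2E (a : fps T) n : one_ax2 a n =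
  (n == 0%N)%:R + (if n is n'.+2 then a n' else 0).
Proof.
rewrite /one_ax2 /fps_add fps_mulC -fps_mulA fps_mulXf /fps_const.
by case: n => [|[|n]] //=; rewrite ?fps_mulXf ?addr0 ?add0r.
Qed.

End FpsAlg.


Section Abstract.
Variable T : comRingType.

Lemma int_const (d : int -> T) : (forall m, d (m + 1) = d m) -> forall m, d m = d 0.
Proof.
move=> h; elim/int_rec => [//|k IH|k IH].
  by rewrite -addn1 PoszD h IH.
rewrite -IH -h; congr d; rewrite -addn1 PoszD opprD addrNK //.
Qed.

Lemma int_eqD (f g : int -> T) : (forall m, f (m+1) - f m = g (m+1) - g m) ->
  f 0 = g 0 -> forall m, f m = g m.
Proof.
move=> hD h0 m.
have := @int_const (fun m => f m - g m).
move=> /(_ _ m) /=; rewrite h0 subrr => H; apply/eqP; rewrite -subr_eq0; apply/eqP.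
apply: H => k; have := hD k; move/eqP; rewrite subr_eq => /eqP ->; ring.
Qed.

Definition RecC (A : nat -> T) (F : int -> nat -> T) := forall m N,
  F (m+1) N + m%:~R * (if N is N'.+1 then F (m+1) N' else 0) =
  \sum_(k < N.+1) A k * F m (N - k)%N.

Definition EE (A : nat -> T) (F : int -> nat -> T) m N :=
  \sum_(k < N) A k.+1 * F m (N - k.+1)%N
  - m%:~R * (if N is N'.+1 then F (m+1) N' else 0).

Lemma rec_delta A F : A 0%N = 1 -> RecC A F -> forall m N,
  F (m+1) N - F m N = EE A F m N.
Proof.
move=> A0 hR m N; have := hR m N; rewrite big_ord_recl /= A0 mul1r subn0 /EE.
have ee : \sum_(i < N) A (bump 0 i) * F m (N - bump 0 i)%N =
          \sum_(k < N) A k.+1 * F m (N - k.+1)%N.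
  by apply: eq_bigr => i _; rewrite /bump add1n.
rewrite ee; set X := (m%:~R * _); set S := \sum_(k < N) _ => e.
by rewrite -(addrK X (F (m+1) N)) e; ring.
Qed.

Lemma rec_F0 A F : A 0%N = 1 -> RecC A F -> F 0 0%N = 1 -> forall m, F m 0%N = 1.
Proof.
move=> A0 hR h0 m; rewrite -h0; apply: (int_const (d := fun m => F m 0%N)) => k.
by apply/eqP; rewrite -subr_eq0 (rec_delta A0 hR) /EE big_ord0 mulr0 subrr.
Qed.

Lemma rec_agree A A' F F' K : A 0%N = 1 -> (forall k, (k < K)%N -> A k = A' k) ->
  RecC A F -> RecC A' F' -> (forall N, F 0 N = A N) -> (forall N, F' 0 N = A' N) ->
  forall N m, (N < K)%N -> F m N = F' m N.
Proof.
move=> A0 hA hR hR' i i' N.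
case: K hA => [|K] hA; first by [].
have A0' : A' 0%N = 1 by rewrite -hA.
elim: N.+1 {-2}N (ltnSn N) => {N} // M IH N ltNM m ltNK.
apply: (int_eqD (f := fun m => F m N) (g := fun m => F' m N)); last by rewrite i i' hA.
move=> k; rewrite (rec_delta A0 hR) (rec_delta A0' hR') /EE.
congr (_ - _).
  apply: eq_bigr => l _; rewrite hA; last first.
    by apply: leq_ltn_trans ltNK; apply: ltn_ord.
  rewrite IH //.
  - have : (N - l.+1 < N)%N by rewrite ltn_subrL /= (leq_ltn_trans _ (ltn_ord l)).
    by move=> h; apply: leq_trans h _; rewrite -ltnS.
  - by apply: leq_ltn_trans ltNK; apply: leq_subr.
case: N ltNM ltNK => [|N] // ltNM ltNK.
by rewrite IH //; apply: ltnW.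
Qed.

Lemma rec_uniq A A' F F' : A 0%N = 1 -> (forall k, A k = A' k) ->
  RecC A F -> RecC A' F' -> (forall N, F 0 N = A N) -> (forall N, F' 0 N = A' N) ->
  forall N m, F m N = F' m N.
Proof.
move=> A0 hA hR hR' i i' N m.
by apply: (@rec_agree A A' F F' N.+1) => // k _; apply: hA.
Qed.

Lemma rec_pert A A' F F' K (d : T) : A 0%N = 1 -> (0 < K)%N ->
  (forall k, (k < K)%N -> A k = A' k) -> A K = A' K + d ->
  RecC A F -> RecC A' F' -> (forall N, F 0 N = A N) -> (forall N, F' 0 N = A' N) ->
  forall m, F m K = F' m K + d * (m + 1)%:~R.
Proof.
move=> A0 K0 hA hK hR hR' i i'.
have A0' : A' 0%N = 1 by rewrite -hA.
have ag := rec_agree A0 hA hR hR' i i'.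
have F0 := rec_F0 A0 hR (etrans (i 0%N) A0).
have F0' := rec_F0 A0' hR' (etrans (i' 0%N) A0').
apply: (int_eqD (f := fun m => F m K) (g := fun m => F' m K + d * (m + 1)%:~R)); last first.
  by rewrite i i' hK add0r mulr1z mulr1.
move=> m /=; rewrite (rec_delta A0 hR) /=.
have -> : F' (m + 1) K + d * (m + 1 + 1)%:~R - (F' m K + d * (m + 1)%:~R) =
   (F' (m+1) K - F' m K) + d by rewrite !intrD; ring.
rewrite (rec_delta A0' hR') /EE.
case: K K0 hA hK ag => [|K] // _ hA hK ag.
rewrite !big_ord_recr /= subnn F0 F0' hK.
rewrite (ag K (m+1)) //.
have -> : \sum_(i0 < K) A i0.+1 * F m (K.+1 - i0.+1)%N =
          \sum_(i0 < K) A' i0.+1 * F' m (K.+1 - i0.+1)%N.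
  apply: eq_bigr => l _; rewrite hA ?ag //.
  - by rewrite subSS ltnS leq_subr.
  - by rewrite ltnS.
ring.
Qed.

Definition Delta (f : int -> T) : int -> T := fun m => f (m + 1) - f m.
Definition Pd d (f : int -> T) := forall m, iter d Delta f m = 0.

Lemma Pd_ext d f g : (forall m, f m = g m) -> Pd d f -> Pd d g.
Proof. by move=> e; have -> : f = g by apply: functional_extensionality. Qed.

Lemma iter_lin d (c1 c2 : T) f g : iter d Delta (fun m => c1 * f m + c2 * g m) =
  fun m => c1 * iter d Delta f m + c2 * iter d Delta g m.
Proof.
elim: d => [|d IH] //=; rewrite IH; apply: functional_extensionality => m.
rewrite /Delta; ring.
Qed.

Lemma iter_shift d c f : iter d Delta (fun m => f (m + c)) = fun m => iter d Delta f (m + c).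
Proof.
elim: d => [|d IH] //=; rewrite IH; apply: functional_extensionality => m.
by rewrite /Delta addrAC.
Qed.

Lemma iter_refl d c f : iter d Delta (fun m => f (c - m)) =
  fun m => (-1) ^+ d * iter d Delta f (c - m - d%:Z).
Proof.
elim: d => [|d IH] /=.
  by apply: functional_extensionality => m; rewrite subr0 mul1r.
rewrite IH; apply: functional_extensionality => m.
rewrite /Delta.
have e1 : c - (m + 1) - d%:Z = c - m - d.+1%:Z by rewrite -addn1 PoszD; ring.
have e2 : c - m - d%:Z = c - m - d.+1%:Z + 1 by rewrite -addn1 PoszD; ring.
rewrite e1 e2 exprS; ring.
Qed.

Lemma Pd_lin d (c1 c2 : T) f g : Pd d f -> Pd d g -> Pd d (fun m => c1 * f m + c2 * g m).
Proof. by move=> hf hg m; rewrite iter_lin hf hg !mulr0 addr0. Qed.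

Lemma Pd_add d f g : Pd d f -> Pd d g -> Pd d (fun m => f m + g m).
Proof. by move=> hf hg; apply: Pd_ext (Pd_lin 1 1 hf hg) => m; rewrite !mul1r. Qed.

Lemma Pd_sub d f g : Pd d f -> Pd d g -> Pd d (fun m => f m - g m).
Proof. by move=> hf hg; apply: Pd_ext (Pd_lin 1 (-1) hf hg) => m; ring. Qed.

Lemma Pd_scal d c f : Pd d f -> Pd d (fun m => c * f m).
Proof. by move=> hf; apply: Pd_ext (Pd_lin c 0 hf hf) => m; ring. Qed.

Lemma Pd_shift d c f : Pd d f -> Pd d (fun m => f (m + c)).
Proof. by move=> hf m; rewrite iter_shift hf. Qed.

Lemma Pd_refl d c f : Pd d f -> Pd d (fun m => f (c - m)).
Proof. by move=> hf m; rewrite iter_refl hf mulr0. Qed.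

Lemma Pd_succ d f : Pd d (Delta f) -> Pd d.+1 f.
Proof. by move=> h m; rewrite iterSr. Qed.

Lemma Pd_pred d f : Pd d.+1 f -> Pd d (Delta f).
Proof. by move=> h m; rewrite -iterSr. Qed.

Lemma Pd_le d d' f : (d <= d')%N -> Pd d f -> Pd d' f.
Proof.
move=> le h m; rewrite -(subnK le) iterD.
have -> : iter d Delta f = fun _ => 0 by apply: functional_extensionality.
suff -> : forall e, iter e Delta (fun _ : int => (0 : T)) = fun _ => 0 by [].
elim=> [|e IH] //=; rewrite IH; apply: functional_extensionality => k.
by rewrite /Delta subrr.
Qed.

Lemma Pd0 d : Pd d (fun _ => 0).
Proof. by apply: (@Pd_le 0) => //. Qed.

Lemma Pd_const c : Pd 1 (fun _ => c).
Proof. by move=> m; rewrite /= /Delta subrr. Qed.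

Lemma Pd_mulm d f : Pd d f -> Pd d.+1 (fun m => m%:~R * f m).
Proof.
elim: d f => [|d IH] f hf.
  have hf' : forall m, f m = 0 := hf.
  by move=> m; rewrite /= /Delta !hf' !mulr0 subrr.
apply: Pd_succ; have h1 := IH _ (Pd_pred hf).
have h2 := Pd_shift 1 hf.
apply: Pd_ext (Pd_add h1 h2) => m; rewrite /Delta intrD; ring.
Qed.

Lemma Pd_sum (I : Type) (r : seq I) (P : pred I) (G : I -> int -> T) d :
  (forall i, P i -> Pd d (G i)) -> Pd d (fun m => \sum_(i <- r | P i) G i m).
Proof.
move=> h; elim: r => [|x r IH].
  by apply: Pd_ext (Pd0 d) => m; rewrite big_nil.
case Px: (P x).
  by apply: Pd_ext (Pd_add (h x Px) IH) => m; rewrite big_cons Px.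
by apply: Pd_ext IH => m; rewrite big_cons Px.
Qed.

Lemma Pd_zero d f m0 : Pd d f -> (forall i, (i < d)%N -> f (m0 + i%:Z) = 0) ->
  forall m, f m = 0.
Proof.
elim: d f m0 => [|d IH] f m0 hf hz m; first by apply: hf.
have hD : forall m, Delta f m = 0.
  apply: (IH _ m0 (Pd_pred hf)) => i lt.
  rewrite /Delta -addrA -PoszD addn1 !hz ?subrr //.
  by apply: ltnW.
have hc : forall m, f m = f 0.
  by apply: int_const => k; apply: subr0_eq; apply: hD.
by rewrite hc -(hc m0) -[m0]addr0 (hz 0%N).
Qed.

End Abstract.


Section FzSec.
Variable T : comUnitRingType.
Variable a : fps T.
Local Notation A := (one_ax2 a).

Definition Fz (m : int) : fps T :=
  match m with
  | Posz k => fps_mul (Gser a k) A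
  | Negz k => fps_mul (Hser a k.+2) A
  end.

Lemma A0 : A 0%N = 1.
Proof. by rewrite one_ax2E addr0. Qed.

Lemma Gser0 : Gser a 0 = fps_const 1.
Proof. by rewrite /Gser big_geq. Qed.

Lemma GserS k : Gser a k.+1 = fps_mul (Gser a k) (fps_mul A (fps_inv (one_cx k%:R))).
Proof. by rewrite /Gser big_nat_recr. Qed.

Lemma Hser1 : Hser a 1 = fps_const 1.
Proof. by rewrite /Hser big_geq. Qed.

Lemma HserS k : Hser a k.+2 =
  fps_mul (Hser a k.+1) (fps_mul (one_cx (- (k.+1)%:R)) (fps_inv A)).
Proof. by rewrite /Hser big_nat_recr. Qed.

Lemma Fz_neg k : Fz (- k%:Z) = fps_mul (Hser a k.+1) A.
Proof.
case: k => [|k]; first by rewrite /= Gser0 Hser1.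
by rewrite -NegzE.
Qed.

Lemma fps_mulCA (f g h : fps T) : fps_mul f (fps_mul g h) = fps_mul g (fps_mul f h).
Proof. by rewrite !fps_mulA (fps_mulC f g). Qed.

Lemma cxV (c : T) : fps_mul (one_cx c) (fps_inv (one_cx c)) = fps_const 1.
Proof. by apply: fps_mulV; rewrite one_cxE /= mulr0 addr0 unitr1. Qed.

Lemma AV : fps_mul A (fps_inv A) = fps_const 1.
Proof. by apply: fps_mulV; rewrite A0 unitr1. Qed.

Lemma Fz_rec m : fps_mul (one_cx m%:~R) (Fz (m + 1)) = fps_mul A (Fz m).
Proof.
case: m => k.
  rewrite -PoszD addn1 /= -pmulrn GserS.
  set c := one_cx k%:R.
  rewrite -!fps_mulA (fps_mulCA c) (fps_mulCA c) (fps_mulA c) cxV fps_mul1f.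
  by rewrite fps_mulCA.
rewrite NegzE.
have -> : - k.+1%:Z + 1 = - k%:Z by rewrite -addn1 PoszD opprD addrNK.
rewrite Fz_neg Fz_neg HserS mulrNz -pmulrn.
set c := one_cx _.
rewrite -!fps_mulA (fps_mulCA A) (fps_mulCA A) (fps_mulA A) AV fps_mul1f.
by rewrite fps_mulCA.
Qed.

Definition FF (m : int) (N : nat) : T := Fz m N.

Lemma FF_rec : RecC A FF.
Proof.
move=> m N; have := congr1 (fun f => f N) (Fz_rec m).
by rewrite /= one_cx_mul.
Qed.

Lemma FF_init N : FF 0 N = A N.
Proof. by rewrite /FF /= Gser0 fps_mul1f. Qed.

Lemma FF0 m : FF m 0%N = 1.
Proof. exact: (rec_F0 A0 FF_rec (etrans (FF_init 0) A0)). Qed.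

Lemma FF1 (j : nat) : FF j 1%N = FF (1 - j%:Z) 1%N.
Proof.
have rec1 : forall m, FF (m + 1) 1%N = FF m 1%N - m%:~R.
  move=> m; have := FF_rec m 1%N.
  rewrite !big_ord_recr big_ord0 /= add0r A0 !one_ax2E /= addr0 mul0r addr0 mul1r FF0 mulr1.
  by move=> <-; ring.
elim: j => [|j IH].
  by rewrite subr0; have := rec1 0; rewrite add0r mulr0z subr0 => ->.
rewrite -addn1 PoszD rec1 IH.
have -> : 1 - j%:Z = (1 - (j%:Z + 1%:Z)) + 1 by ring.
by rewrite rec1 !(intrB, intrD); ring.
Qed.

Lemma lemma_seriesE (n j : nat) : (0 < j)%N ->
  lemma_series a j n = FF j n.+2 - FF (1 - j%:Z) n.+2.
Proof.
move=> j0; have [j' ej] : exists j', j = j'.+1 by exists j.-1; rewrite prednK.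
set D := fps_sub (Gser a j) (Hser a j).
have hDA : fps_mul D A = fps_sub (FF j) (FF (1 - j%:Z)).
  rewrite /D fps_mulBl /FF.
  have -> : 1 - j%:Z = - j'%:Z by rewrite ej -addn1 PoszD; ring.
  by rewrite Fz_neg -ej.
have D0 : D 0%N = 0.
  have := congr1 (fun f => f 0%N) hDA.
  by rewrite /= /fps_mul big_ord1 A0 mulr1 /fps_sub !FF0 subrr.
have D1 : D 1%N = 0.
  have := congr1 (fun f => f 1%N) hDA.
  rewrite /= /fps_mul !big_ord_recr big_ord0 /= D0 mul0r !add0r A0 mulr1 /fps_sub.
  by rewrite FF1 subrr.
have := congr1 (fun f => f n.+2) hDA; rewrite /= /fps_sub => <-.
rewrite /lemma_series /fps_mul /fps_divX [in RHS]big_ord_recl [in RHS]big_ord_recl /=.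
rewrite D0 D1 !mul0r !add0r.
by apply: eq_bigr => i _; rewrite /bump /= !add1n addn2 !subSS.
Qed.

End FzSec.


Section Interp.
Variable T : comRingType.

Lemma rec_Pd A (F : int -> nat -> T) : A 0%N = 1 -> RecC A F ->
  forall N, Pd (N.*2).+1 (fun m => F m N).
Proof.
move=> A0 hR N; elim: N.+1 {-2}N (ltnSn N) => {N} // M IH N ltNM.
apply: Pd_succ.
have e : forall m, EE A F m N = Delta (fun m => F m N) m.
  by move=> m; rewrite /Delta (rec_delta A0 hR).
apply: (Pd_ext e); rewrite /EE.
apply: Pd_sub.
  apply: Pd_sum => k _; apply: Pd_scal.
  have lt : (N - k.+1 < N)%N by rewrite ltn_subrL /= (leq_ltn_trans _ (ltn_ord k)).
  apply: (Pd_le _ (IH _ _)).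
    by rewrite ltn_double ltn_subrL /= (leq_ltn_trans _ (ltn_ord k)).
  by apply: leq_trans lt _; rewrite -ltnS.
clear e; case: N ltNM => [|N] ltNM.
  by apply: Pd_ext (Pd0 T _) => m; rewrite mulr0.
have := Pd_mulm (Pd_shift 1 (IH N ltNM)).
by rewrite doubleS.
Qed.

Lemma Pd_antisym d (h : int -> T) : (forall x : T, x + x = 0 -> x = 0) ->
  Pd (d.*2).+1 h -> (forall m, h (1 - m) = - h m) -> Pd d.*2 h.
Proof.
move=> two hP hA.
set g := iter d.*2 (@Delta T) h.
have [c gc] : exists c, forall m, g m = c.
  exists (g 0); apply: int_const => m; apply: subr0_eq; exact: (hP m).
have e1 := iter_refl d.*2 1 h.
have e2 : (fun m => h (1 - m)) = (fun m => (-1) * h m + 0 * h m).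
  by apply: functional_extensionality => m; rewrite hA; ring.
rewrite e2 iter_lin in e1.
have sg : (-1) ^+ d.*2 = 1 :> T by rewrite -mul2n mulnC exprM sqrr_sign.
have := congr1 (fun f => f 0) e1; rewrite /= -/g !gc sg => e.
have g0 : c = 0.
  apply: two; have -> : c + c = 1 * c - (-1 * c + 0 * c) by ring.
  by rewrite e subrr.
by move=> m; rewrite /= -/g gc g0.
Qed.

Definition vf (m : int) : T := (m * (m - 1))%:~R.
Definition Qf n (W : nat -> T) (m : int) := \sum_(i < n.+1) W i * vf m ^+ i.

Lemma Pd_vf i : Pd (i.*2).+1 (fun m => vf m ^+ i).
Proof.
elim: i => [|i IH].
  by apply: Pd_ext (Pd_const (1 : T)) => m; rewrite expr0.
have h1 := Pd_mulm (Pd_mulm IH).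
have h2 := Pd_le (leqnSn _) (Pd_mulm IH).
apply: Pd_ext (Pd_sub h1 h2) => m.
rewrite exprS /vf intrM intrB; ring.
Qed.

Lemma Pd_Qf n W : Pd (n.*2).+1 (Qf n W).
Proof.
apply: Pd_sum => i _; apply: Pd_scal; apply: Pd_le (Pd_vf i).
by rewrite ltnS leq_double -ltnS.
Qed.

Lemma interp_main n (h : int -> T) (W : nat -> T) :
  (forall x : T, x + x = 0 -> x = 0) ->
  Pd (n.+1.*2).+1 h -> (forall m, h (1 - m) = - h m) ->
  (forall l : nat, (0 < l <= n.+1)%N -> h l = (2 * l%:Z - 1)%:~R * Qf n W l) ->
  forall m, h m = (2 * m - 1)%:~R * Qf n W m.
Proof.
move=> two hP hA hI.
have hP' := Pd_antisym two hP hA.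
set d := fun m => h m - (2 * m - 1)%:~R * Qf n W m.
have Pdd : Pd (n.+1.*2) d.
  apply: Pd_sub => //.
  have h1 := Pd_mulm (Pd_Qf n W).
  have h2 := Pd_le (leqnSn _) (Pd_Qf n W).
  apply: Pd_ext (Pd_sub (Pd_scal 2 h1) h2) => m.
  by rewrite intrB intrM; ring.
have dA : forall m, d (1 - m) = - d m.
  move=> m; rewrite /d hA /Qf /vf.
  have -> : (1 - m) * (1 - m - 1) = m * (m - 1) by ring.
  have -> : 2 * (1 - m) - 1 = - (2 * m - 1) by ring.
  rewrite mulrNz; ring.
have dI : forall l : nat, (0 < l <= n.+1)%N -> d l = 0.
  by move=> l hl; rewrite /d hI // subrr.
move=> m; apply/eqP; rewrite -subr_eq0; apply/eqP.
apply: (Pd_zero Pdd (m0 := - n%:Z)) => i lti.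
case: (ltnP n i) => hi.
  have -> : - n%:Z + i%:Z = (i - n)%N by lia.
  by apply: dI; lia.
have -> : - n%:Z + i%:Z = 1 - Posz (n - i).+1 by lia.
by rewrite dA dI ?oppr0 //; lia.
Qed.

End Interp.


Section Lag.
Variable k : nat.
Local Notation U := {mpoly rat[k]}.

Definition vv (l : nat) : rat := (l.+1 * l)%:R.

Definition Lp n l : {poly rat} :=
  \prod_(q < n) (('X - (vv (bump l q))%:P) * ((vv l - vv (bump l q))^-1)%:P).

Definition LW n (z : nat -> U) i : U := \sum_(l < n.+1) ((Lp n l)`_i)%:A * z l.

Lemma vv_inj l l' : vv l = vv l' -> l = l'.
Proof.
rewrite /vv => /eqP; rewrite eqr_nat => /eqP e.
case: (ltngtP l l') => // h.
  have : (l.+1 * l < l'.+1 * l')%N.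
    by apply: (@leq_ltn_trans (l.+1 * l')); [rewrite leq_mul2l ltnW | rewrite ltn_mul2r ltnS h andbT; exact: (leq_ltn_trans (leq0n l) h)].
  by rewrite e ltnn.
have : (l'.+1 * l' < l.+1 * l)%N.
  by apply: (@leq_ltn_trans (l'.+1 * l)); [rewrite leq_mul2l ltnW | rewrite ltn_mul2r ltnS h andbT; exact: (leq_ltn_trans (leq0n l') h)].
by rewrite e ltnn.
Qed.

Lemma Lp_size n l : (size (Lp n l) <= n.+1)%N.
Proof.
rewrite /Lp; elim: n => [|n IH]; first by rewrite big_ord0 size_poly1.
rewrite big_ord_recr /=.
apply: leq_trans (size_mul_leq _ _) _.
have h2 : (size ((('X - (vv (bump l n))%:P) * ((vv l - vv (bump l n))^-1)%:P)%R) <= 2)%N.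
  apply: leq_trans (size_mul_leq _ _) _.
  have := size_polyC_leq1 ((vv l - vv (bump l n))^-1).
  by rewrite size_XsubC; case: size => [|[]].
move: IH h2; set p := \prod_(i < n) _; set f := (_ * _)%R.
move: (size p) (size f) => x y; lia.
Qed.

Lemma Lp_eval n (l l0 : nat) : (l < n.+1)%N -> (l0 < n.+1)%N ->
  (Lp n l).[vv l0] = (l == l0)%:R.
Proof.
move=> hl hl0; rewrite /Lp horner_prod.
case: (eqVneq l l0) => [<-|ne].
  rewrite big1 // => q _; rewrite hornerM hornerXsubC hornerC mulfV //.
  rewrite subr_eq0; apply/eqP => /vv_inj /eqP; by rewrite (negbTE (neq_bump _ _)).
have q0lt : (unbump l l0 < n)%N.
  rewrite /unbump; case: (ltnP l l0) => h /=; lia.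
rewrite (bigD1 (Ordinal q0lt)) //= hornerM hornerXsubC hornerC.
by rewrite unbumpK ?subrr ?mul0r // inE eq_sym.
Qed.

Lemma LW_interp n (z : nat -> U) (l0 : nat) : (l0 < n.+1)%N ->
  \sum_(i < n.+1) LW n z i * ((vv l0)%:A) ^+ i = z l0.
Proof.
move=> hl0; rewrite /LW.
under eq_bigr do rewrite mulr_suml.
rewrite exchange_big /=.
have e : forall l : 'I_n.+1, \sum_(i < n.+1) ((Lp n l)`_i)%:A * z l * (vv l0)%:A ^+ i
   = z l * ((l == l0 :> nat)%:R)%:A.
  move=> l; rewrite -(Lp_eval (ltn_ord l) hl0) (horner_coef_wide _ (Lp_size n l)).
  rewrite -!in_algE rmorph_sum mulr_sumr; apply: eq_bigr => i _.
  by rewrite rmorphM rmorphXn /=; ring.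
rewrite (eq_bigr _ (fun l _ => e l)).
rewrite (bigD1 (Ordinal hl0)) //= eqxx mulr1n scale1r mulr1 big1 ?addr0 //.
move=> l ne; have -> : (l == l0 :> nat) = false.
  by apply/negbTE; move: ne; apply: contra => /eqP e'; apply/eqP/val_inj.
by rewrite mulr0n scale0r mulr0.
Qed.

End Lag.


Lemma RecC_map (T T' : comNzRingType) (phi : {rmorphism T -> T'}) A F :
  RecC A F -> RecC (fun k => phi (A k)) (fun m N => phi (F m N)).
Proof.
move=> h m N; have := congr1 phi (h m N).
rewrite rmorphD rmorphM rmorph_int rmorph_sum.
case: N => [|N] /=; rewrite ?rmorph0 => ->; apply: eq_bigr => i _; by rewrite rmorphM.
Qed.

Section Small.
Variable T : comUnitRingType.
Variable a : fps T.

Lemma FF_small : FF a 1 2 - FF a 0 2 = a 0%N /\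
                 FF a 2 2 - FF a (-1) 2 = 3%:R * a 0%N + 1.
Proof.
have rec1 : forall m, FF a (m + 1) 1%N = FF a m 1%N - m%:~R.
  move=> m; have := FF_rec a m 1%N.
  rewrite !big_ord_recr big_ord0 /= add0r A0 !one_ax2E /= addr0 mul0r addr0 mul1r FF0 mulr1.
  by move=> <-; ring.
have rec2 : forall m, FF a (m + 1) 2 + m%:~R * FF a (m + 1) 1%N = FF a m 2 + a 0%N.
  move=> m; have := FF_rec a m 2.
  rewrite !big_ord_recr big_ord0 /= add0r A0 !one_ax2E /= !FF0.
  by move=> ->; ring.
have F01 : FF a 0 1%N = 0 by rewrite FF_init one_ax2E /= addr0.
have r10 := rec1 0; rewrite add0r F01 mulr0z subr0 in r10.
have r11 := rec1 1; rewrite (_ : (1 + 1 : int) = 2) // r10 mulr1z sub0r in r11.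
have r1m := rec1 (-1); rewrite addNr F01 mulrNz mulr1z opprK in r1m.
have r20 := rec2 0; rewrite add0r mulr0z mul0r addr0 in r20.
have r21 := rec2 1; rewrite (_ : (1 + 1 : int) = 2) // r11 mulr1z in r21.
have r2m := rec2 (-1); rewrite addNr F01 mulr0 addr0 in r2m.
split; first by rewrite r20; ring.
have -> : FF a 2 2 = FF a 1 2 + a 0%N + 1.
  by rewrite -[FF a 2 2](addrK (1 * -1)) r21; ring.
have -> : FF a (-1) 2 = FF a 0 2 - a 0%N by rewrite r2m; ring.
by rewrite r20; ring.
Qed.

End Small.


Definition au (n : nat) (i : nat) : {mpoly rat[n.-1]} :=
  if insub i is Some k then 'X_k else 0.

Definition hu (n : nat) (m : int) : {mpoly rat[n.-1]} :=
  FF (au n) m n.+1 - FF (au n) (1 - m) n.+1.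

Definition zz (n : nat) (l : nat) : {mpoly rat[n.-1]} :=
  in_alg _ (((2 * l).+1)%:R^-1 : rat) * hu n (l.+1)%:Z.

Definition Slag (n : nat) (i : nat) : {mpoly rat[n.-1]} := LW n (zz n) i.

Definition Sfun (n : nat) : nat -> {mpoly rat[n.-1]} :=
  match n as n0 return nat -> {mpoly rat[n0.-1]} with
  | 1%N => fun i => if i == 1%N then (1 / 6 : rat)%:MP else 0
  | n0 => Slag n0
  end.

Lemma Sfun_lag n : n != 1%N -> Sfun n = Slag n.
Proof. by case: n => [|[|n]]. Qed.

Lemma two_U k (x : {mpoly rat[k]}) : x + x = 0 -> x = 0.
Proof.
move=> h; have : (2^-1 : rat) *: (x + x) = x.
  by rewrite -mulr2n -scaler_nat scalerA mulVf // scale1r.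
by rewrite h scaler0.
Qed.

Lemma hu_Pd n : Pd (n.+1.*2).+1 (hu n).
Proof.
have P := rec_Pd (A0 (au n)) (FF_rec (au n)) n.+1.
exact: (Pd_sub P (Pd_refl 1 P)).
Qed.

Lemma hu_anti n m : hu n (1 - m) = - hu n m.
Proof. rewrite /hu (_ : 1 - (1 - m) = m); last by ring. by rewrite opprB. Qed.

Lemma interp_lag n : forall l : nat, (0 < l <= n.+1)%N ->
  hu n l = (2 * l%:Z - 1)%:~R * Qf n (Slag n) l.
Proof.
case=> [|l0] // /andP [_ hl0].
rewrite /Qf /vf.
have -> : Posz l0.+1 - 1 = Posz l0 by rewrite -addn1 PoszD addrK.
rewrite -PoszM -pmulrn.
have -> : ((l0.+1 * l0)%:R : {mpoly rat[n.-1]}) = (vv l0)%:A.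
  by rewrite -in_algE rmorph_nat.
rewrite /Slag LW_interp // /zz.
have -> : 2 * Posz l0.+1 - 1 = Posz (2 * l0).+1 by lia.
rewrite -pmulrn mulrA -(rmorph_nat (in_alg {mpoly rat[n.-1]})) -rmorphM mulfV.
  by rewrite rmorph1 mul1r.
by rewrite pnatr_eq0.
Qed.

Lemma interp_one : forall l : nat, (0 < l <= 2)%N ->
  hu 1 l = (2 * l%:Z - 1)%:~R * Qf 1 (Sfun 1) l.
Proof.
have a0 : au 1 0%N = 0 by rewrite /au insubF.
have [h1 h2] := FF_small (au 1).
case=> [|[|[|l]]] // _.
  rewrite /hu (_ : 1 - 1%:Z = 0) // h1 a0 /Qf /vf !big_ord_recr big_ord0 /=.
  by rewrite (_ : 1 * (1 - 1) = 0 :> int) // mulr0z expr1 !mul0r !add0r !mulr0.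
rewrite /hu (_ : 1 - 2%:Z = -1) // h2 a0 mulr0 add0r /Qf /vf !big_ord_recr big_ord0 /=.
rewrite (_ : 2 * 2 - 1 = 3 :> int) // (_ : 2 * (2 - 1) = 2 :> int) // expr1 !mul0r !add0r.
rewrite -!pmulrn mul_mpolyC -scalerAr -natrM.
have -> : ((3 * 2)%:R : {mpoly rat[1.-1]}) = (6%:R : rat)%:A by rewrite -in_algE rmorph_nat.
by rewrite scalerA div1r mulVf // scale1r.
Qed.

Lemma univ n : (0 < n)%N -> forall m, hu n m = (2 * m - 1)%:~R * Qf n (Sfun n) m.
Proof.
case: n => [|[|n]] // _.
  exact: (interp_main (@two_U _) (hu_Pd 1) (@hu_anti 1) interp_one).
rewrite Sfun_lag //.
exact: (interp_main (@two_U _) (hu_Pd _) (@hu_anti _) (@interp_lag _)).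
Qed.

Section Main.
Variables (n : nat) (R : comUnitAlgType rat) (a : nat -> R).
Local Notation M := (mmap (in_alg R) (fun k : 'I_n => a (nat_of_ord k))).

Lemma main (j : nat) : (0 < j)%N ->
  lemma_series a j n =
  (2 * j - 1)%N%:R *
    (a n + \sum_(i < n.+2)
       mmap (in_alg R) (fun k : 'I_n => a (nat_of_ord k)) (Sfun n.+1 i)
       * ((j * (j - 1))%N%:R) ^+ i).
Proof.
move=> j0.
pose phi := mmap (in_alg R) (fun k : 'I_n => a (nat_of_ord k)).
pose ah i := phi (au n.+1 i).
have phiX : forall k : 'I_n, phi 'X_k = a k.
  by move=> k; rewrite /phi mmapX mmap1U.
have ahE : forall i, ah i = if (i < n)%N then a i else 0.
  move=> i; rewrite /ah /au; case: insubP => [k hk <-|hn].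
    by rewrite phiX ifT //; exact: ltn_ord k.
  by rewrite /phi raddf0 (negbTE hn).
have hmap : forall N m, FF ah m N = phi (FF (au n.+1) m N).
  apply: (rec_uniq (A0 ah) _ (FF_rec ah) (RecC_map phi (FF_rec (au n.+1)))).
  - move=> k; rewrite !one_ax2E rmorphD rmorph_nat; case: k => [|[|k]] //; rewrite /phi ?raddf0 //.
  - move=> N; exact: (FF_init ah N).
  - by move=> N; rewrite FF_init.
have hpert : forall m, FF a m n.+2 = FF ah m n.+2 + a n * (m + 1)%:~R.
  apply: (rec_pert (A0 a) _ _ _ (FF_rec a) (FF_rec ah) (FF_init a) (FF_init ah)) => //.
  - move=> k; rewrite !one_ax2E; case: k => [|[|k]] // hk.
    by rewrite ahE ifT //.
  - by rewrite one_ax2E one_ax2E ahE ltnn addr0.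
rewrite lemma_seriesE // !hpert !hmap /phi.
have MB : forall x y, M (x - y) = M x - M y := fun x y => rmorphB _ x y.
have MM : forall x y, M (x * y) = M x * M y := fun x y => rmorphM _ x y.
have Mz : forall z : int, M (z%:~R) = z%:~R := fun z => rmorph_int _ z.
have MX : forall x k, M (x ^+ k) = M x ^+ k := fun x k => rmorphXn _ k x.
have MS : forall (G : 'I_n.+2 -> {mpoly rat[n]}), M (\sum_i G i) = \sum_i M (G i).
  by move=> G; exact: rmorph_sum.
have ej : j%:Z * (j%:Z - 1) = Posz (j * (j - 1))%N.
  by rewrite PoszM (_ : j%:Z - 1 = Posz (j - 1)%N) //; lia.
have E := congr1 M (univ (ltn0Sn n) j).
rewrite /hu MB MM Mz /Qf MS in E.
rewrite (_ : 2 * j%:Z - 1 = Posz (2 * j - 1)%N) in E; last by lia.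
rewrite -pmulrn in E.
have EX : \sum_(i < n.+2) M (Sfun n.+1 i * vf _ j ^+ i) =
  \sum_(i < n.+2) M (Sfun n.+1 i) * ((j * (j - 1))%N%:R) ^+ i.
  by apply: eq_bigr => i _; rewrite MM MX /vf Mz ej -pmulrn.
rewrite EX in E.
move: E.
set X := \sum_(i < n.+2) _.
set P1 := M (FF (au n.+1) j n.+2).
set P2 := M (FF (au n.+1) (1 - j%:Z) n.+2).
move=> E.
have -> : P1 + a n * (j%:Z + 1)%:~R - (P2 + a n * (1 - j%:Z + 1)%:~R) =
  (P1 - P2) + a n * (j%:Z + 1 - (1 - j%:Z + 1))%:~R.
  by rewrite !(intrD, intrN); ring.
rewrite E (_ : j%:Z + 1 - (1 - j%:Z + 1) = Posz (2 * j - 1)%N); last by lia.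
rewrite -pmulrn; ring.
Qed.

End Main.

Theorem lemma2p2 :
  exists S : forall n : nat, nat -> {mpoly rat[n.-1]},
    [/\ S 1%N 0%N = 0,
        S 1%N 1%N = (1 / 6 : rat)%:MP &
        forall (n j : nat), (0 < n)%N -> (0 < j)%N ->
        forall (R : comUnitAlgType rat) (a : nat -> R),
          lemma_series a j n.-1 =
          (2 * j - 1)%N%:R *
            (a n.-1 + \sum_(i < n.+1)
                 mmap (in_alg R) (fun k : 'I_n.-1 => a (nat_of_ord k)) (S n i)
                 * ((j * (j - 1))%N%:R) ^+ i)].
Proof.
exists Sfun; split => //.
move=> n j n0 j0 R a; case: n n0 => [|n] // _.
exact: main.
Qed.
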